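(* Let $q=p^f$ be a prime power and $N>2$ an integer with $N\mid(q-1)$. Let $\gamma$ be a primitive element of $\mathbb{F}_q$, $C_0=\langle\gamma^N\rangle$, and let $\eta_a=\sum_{x\in\gamma^aC_0}\psi(x)$, $0\le a\le N-1$. Assume the $\eta_a$ take exactly three rational values $\alpha_1,\alpha_2,\alpha_3$ in arithmetic progression, with $\alpha_1-\alpha_2=-t<0$ and $\alpha_3-\alpha_2=t>0$. Let $Z_N=\mathbb{F}_q^*/C_0$ with generator $\bar\gamma=\gamma C_0$, and $I_i=\{\bar\gamma^a\in Z_N:\eta_a=\alpha_i\}$, $i=1,2,3$. Then $I_1-I_3$ generates a circulant weighing matrix $\mathbf{CW}(N,q/t^2)$ if and only if $q$ is a square and $\alpha_2=(\sqrt q-1)/N$.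
   Context: $\psi$ is the canonical additive character of $\mathbb{F}_q$: $\psi(x)=\xi_p^{\mathrm{Tr}_{q/p}(x)}$. A circulant weighing matrix $\mathbf{CW}(N,w)$ is an $N\times N$ circulant matrix $M$ with entries in $\{-1,0,1\}$ satisfying $MM^\top=wI$. The element $I_1-I_3$ of the group ring $\mathbb{Z}[Z_N]$ (subsets identified with the sums of their elements) generates the circulant matrix with first row $(a_0,\dots,a_{N-1})$, where $a_i=1$ if $\bar\gamma^i\in I_1$, $a_i=-1$ if $\bar\gamma^i\in I_3$, and $a_i=0$ otherwise; it generates a $\mathbf{CW}(N,w)$ exactly when $(I_1-I_3)(I_1-I_3)^{(-1)}=w\cdot 1$ in $\mathbb{Z}[Z_N]$, where $(\sum a_gg)^{(-1)}=\sum a_gg^{-1}$. *)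

(* Defs.v *)
From HB Require Import structures.
From mathcomp Require Import all_boot all_order all_algebra all_field.
Set Implicit Arguments. Unset Strict Implicit. Unset Printing Implicit Defensive.
Import Order.TTheory GRing.Theory Num.Theory.
Local Open Scope ring_scope.

Definition trace_p (F : finFieldType) (p f : nat) (x : F) : F :=
  \sum_(i < f) x ^+ (p ^ i).

(* The integer k in {0,..,p-1} with Tr(x) = k (the trace lies in F_p). *)
Definition tr_nat (F : finFieldType) (p f : nat) (x : F) : nat :=
  find (fun k : nat => (k%:R : F) == trace_p p f x) (iota 0 p).

Definition psi (F : finFieldType) (p f : nat) (xi : algC) (x : F) : algC :=
  xi ^+ tr_nat p f x.

(* x belongs to the coset gamma^a C_0, where C_0 = <gamma^N> has order (q-1)/N. *)
Definition in_coset (F : finFieldType) (g : F) (N a : nat) (x : F) : bool :=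
  [exists k : 'I_((#|F|.-1) %/ N), x == g ^+ (a + N * k)].

Definition gperiod (F : finFieldType) (p f : nat) (xi : algC) (g : F) (N a : nat) : algC :=
  \sum_(x : F | in_coset g N a x) psi p f xi x.

(* Coefficient sequence of I_1 - I_3 w.r.t. gamma-bar^a, a = 0..N-1. *)
Definition wseq (e : nat -> algC) (al1 al3 : algC) (a : nat) : algC :=
  if e a == al1 then 1 else if e a == al3 then -1 else 0.

Definition circ_mx (N : nat) (a : nat -> algC) : 'M[algC]_N :=
  \matrix_(i < N, j < N) a ((j + N - i) %% N)%N.

Definition is_CW (N : nat) (w : algC) (M : 'M[algC]_N) : Prop :=
  (forall i j, M i j \in [:: 0; 1; -1]) /\ M *m M^T = w%:M.

(* Main.v *)
Require Import Defs.
From HB Require Import structures.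
From mathcomp Require Import all_boot all_order all_algebra all_field zify ring.
Set Implicit Arguments. Unset Strict Implicit. Unset Printing Implicit Defensive.
Import Order.TTheory GRing.Theory Num.Theory.
Local Open Scope ring_scope.


Set Default Proof Using "All".
Section PsiFacts.
Variables (F : finFieldType) (p f : nat) (xi : algC).
Hypotheses (pr_p : prime p) (chF : p \in [pchar F]) (cardF : #|F| = (p ^ f)%N)
  (xi_pr : p.-primitive_root xi) (f_gt0 : (0 < f)%N).

Lemma pcnat i : [pchar F].-nat (p ^ i)%N.
Proof. by rewrite pnatX pnatE // chF. Qed.

Lemma trace_add (x y : F) : trace_p p f (x + y) = trace_p p f x + trace_p p f y.
Proof.
rewrite /trace_p -big_split /=; apply: eq_bigr => i _.
by rewrite exprDn_pchar // pcnat.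
Qed.

Lemma natF_eq a b : (a%:R : F) = b%:R -> a = b %[mod p].
Proof.
move=> E; case: (leqP a b) => h.
  by apply/eqP; rewrite eq_sym eqn_mod_dvd // (dvdn_pcharf chF) natrB // E subrr.
by apply/eqP; rewrite eqn_mod_dvd ?(ltnW h) // (dvdn_pcharf chF) natrB ?(ltnW h) // E subrr.
Qed.

Lemma natF_small a b : (a < p)%N -> (b < p)%N -> (a%:R : F) = b%:R -> a = b.
Proof. by move=> ha hb /natF_eq; rewrite !modn_small. Qed.

Lemma frob_nat k : (k%:R : F) ^+ p = k%:R.
Proof.
elim: k => [|k IH]; first by rewrite expr0n eqn0Ngt prime_gt0.
by rewrite -addn1 natrD exprDn_pchar ?pnatE // IH expr1n.
Qed.

Lemma roots_p (y : F) : y ^+ p = y -> exists2 k, (k < p)%N & (k%:R : F) = y.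
Proof.
move=> Hy.
set S := [set z : F | z ^+ p == z].
set K := [set (val k)%:R | k : 'I_p] : {set F}.
have KS : K \subset S.
  by apply/subsetP => z /imsetP [k _ ->]; rewrite inE frob_nat.
have cK : #|K| = p.
  rewrite card_imset ?card_ord // => k1 k2 E.
  exact/val_inj/(natF_small (ltn_ord k1) (ltn_ord k2) E).
have cS : (#|S| <= p)%N.
  have nz : ('X^p - 'X : {poly F}) != 0.
    rewrite -size_poly_eq0 size_addl ?size_polyXn // size_opp size_polyX ltnS.
    exact: prime_gt1.
  have sz : size ('X^p - 'X : {poly F}) = p.+1.
    by rewrite size_addl ?size_polyXn // size_opp size_polyX ltnS prime_gt1.
  have := @max_poly_roots F _ (enum S) nz.
  rewrite enum_uniq -cardE sz ltnS; apply => //; apply/allP => z; rewrite mem_enum inE.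
  by rewrite /root !hornerE subr_eq0.
have: K == S by rewrite eqEcard KS cK.
move/eqP=> KeS.
have yK: y \in K by rewrite KeS inE Hy.
move/imsetP: yK => [k _ ->].
exists (val k); [exact: (valP k) | by []].
Qed.

Lemma xq (x : F) : x ^+ (p ^ f)%N = x.
Proof. by rewrite -cardF expf_card. Qed.

Lemma trace_frob (x : F) : trace_p p f x ^+ p = trace_p p f x.
Proof.
rewrite /trace_p -(pFrobenius_autE chF) rmorph_sum /=.
under eq_bigr => i _ do rewrite pFrobenius_autE -exprM -expnSr.
have := xq x; case: f f_gt0 => // f' _ xq'.
rewrite big_ord_recr big_ord_recl /= addrC; congr (_ + _).
by rewrite expn0 expr1 xq'.
Qed.

Lemma tr_spec (x : F) : (tr_nat p f x < p)%N /\ (tr_nat p f x)%:R = trace_p p f x.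
Proof.
have [k kp Ek] := roots_p (trace_frob x).
have hs : has (fun k : nat => (k%:R : F) == trace_p p f x) (iota 0 p).
  by apply/hasP; exists k; rewrite ?mem_iota ?Ek //.
have := nth_find 0 hs; move: hs; rewrite has_find size_iota => hs.
by rewrite /tr_nat nth_iota ?add0n // => /eqP.
Qed.


Lemma trace_nz : exists x : F, trace_p p f x != 0.
Proof.
have p1 := prime_gt1 pr_p.
move: cardF; case: f f_gt0 => // f' _ cF.
pose T : {poly F} := \sum_(i < f'.+1) 'X^(p ^ i).
have TE x : T.[x] = trace_p p f'.+1 x.
  by rewrite /T horner_sum; apply: eq_bigr => i _; rewrite hornerXn.
have Tnz : T != 0.
  apply/eqP => /(congr1 (fun q : {poly F} => q`_(p ^ f')%N)).
  rewrite coef0 /T coef_sum (bigD1 ord_max) //= coefXn eqxx big1 ?addr0.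
    by move/eqP; rewrite oner_eq0.
  move=> i /eqP ne; rewrite coefXn eqn_exp2l //.
  case: eqP => // E; exfalso; apply: ne; apply: val_inj => /=; exact: esym E.
have sT : (size T <= (p ^ f').+1)%N.
  apply: leq_trans (size_sum _ _ _) _.
  apply/bigmax_leqP => i _; rewrite size_polyXn ltnS leq_pexp2l ?prime_gt0 //.
  by rewrite -ltnS.
apply/existsP; rewrite -negb_forall; apply/negP => /forallP H.
have := @max_poly_roots F T (enum F) Tnz.
rewrite enum_uniq -cardE cF.
have -> : all (root T) (enum F).
  by apply/allP => x _; rewrite /root TE; apply/eqP/eqP; rewrite -[_ == _]negbK H.
move=> /(_ isT isT) lt.
have := leq_trans lt sT; by rewrite ltnS leqNgt ltn_exp2l // ltnSn.
Qed.

Lemma psi_add (x y : F) : psi p f xi (x + y) = psi p f xi x * psi p f xi y.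
Proof.
rewrite /psi -exprD -(prim_expr_mod xi_pr) -[in RHS](prim_expr_mod xi_pr).
have [_ E1] := tr_spec x; have [_ E2] := tr_spec y; have [_ E3] := tr_spec (x + y).
congr (_ ^+ _); apply: natF_eq.
by rewrite E3 natrD E1 E2 trace_add.
Qed.

Lemma psi0 : psi p f xi (0 : F) = 1.
Proof.
have := psi_add (0 : F) 0; rewrite addr0 => E.
have : psi p f xi (0 : F) != 0.
  rewrite /psi expf_neq0 //; apply/eqP => xi0; have := prim_expr_order xi_pr.
  by rewrite xi0 expr0n eqn0Ngt prime_gt0 //= => /eqP; rewrite eq_sym oner_eq0.
move=> nz; apply: (mulfI nz); by rewrite mulr1 -E.
Qed.

Lemma psi_nontriv : exists x : F, psi p f xi x != 1.
Proof.
have [x tx] := trace_nz; exists x.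
have [lt E] := tr_spec x.
rewrite /psi -(prim_order_dvd xi_pr).
apply/negP => /dvdnP [k Ek].
move: E lt; rewrite Ek; case: k Ek => [|k] Ek.
  by rewrite mul0n => E; move: tx; rewrite -E eqxx.
by rewrite mulSn => _; rewrite ltnNge leq_addr.
Qed.

Lemma sum_psi : \sum_(x : F) psi p f xi x = 0.
Proof.
have [x0 nt] := psi_nontriv.
set S := \sum_(x : F) _.
have : S = psi p f xi x0 * S.
  rewrite /S mulr_sumr (reindex_inj (addrI x0)) /=.
  by apply: eq_bigr => x _; rewrite psi_add.
move/eqP; rewrite -subr_eq0 -{1}[S]mul1r -mulrBl mulf_eq0 subr_eq0 eq_sym (negbTE nt).
by move/eqP.
Qed.

Lemma sum_psi_mul (v : F) :
  \sum_(x : F | x != 0) psi p f xi (x * v) = if v == 0 then (#|F|.-1)%:R else -1.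
Proof.
case: eqP => [->|/eqP nz].
  under eq_bigr do rewrite mulr0 psi0.
  rewrite sumr_const; congr (_%:R).
  by rewrite cardC1.
have := sum_psi; rewrite (bigD1 0) //= psi0 => E.
have E2 : \sum_(x : F | x != 0) psi p f xi (x * v) = \sum_(x : F | x != 0) psi p f xi x.
  rewrite [RHS](reindex_inj (mulIf nz)) /=; apply: eq_bigl => x.
  by rewrite mulf_eq0 (negbTE nz) orbF.
rewrite E2; move/eqP: E; rewrite addrC addr_eq0 => /eqP <-.
by apply: eq_bigl => x.
Qed.

End PsiFacts.


Set Default Proof Using "All".
Section Cosets.
Variables (F : finFieldType) (g : F) (N : nat).
Hypotheses (g_pr : (#|F|.-1).-primitive_root g) (N_gt0 : (0 < N)%N)
  (N_dvd : (N %| #|F|.-1)%N).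

Let n := #|F|.-1.

Lemma cardF_S : #|F| = n.+1.
Proof. rewrite /n prednK //; apply/card_gt0P; by exists 0. Qed.

Lemma gpow_surj (x : F) : x != 0 -> exists i : nat, x = g ^+ i.
Proof.
move=> nz; have xn : x ^+ n = 1.
  apply: (mulfI nz); rewrite mulr1 -exprS -cardF_S.
  exact: expf_card.
by have [i ->] := prim_rootP g_pr xn; exists i.
Qed.

Lemma g_nz i : g ^+ i != 0.
Proof.
apply: expf_neq0; apply/eqP => g0; have := prim_expr_order g_pr.
rewrite g0 expr0n; case: eqP => [n0|_]; last by move/eqP; rewrite eq_sym oner_eq0.
by have := prim_order_gt0 g_pr; rewrite n0.
Qed.

Lemma coset_exp a i : (a < N)%N -> in_coset g N a (g ^+ i) = (i %% N == a)%N.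
Proof.
move=> aN; apply/existsP/eqP => [[k /eqP Hk]|Ha].
  move/eqP: Hk; rewrite (eq_prim_root_expr g_pr) => /eqP Hk.
  have := congr1 (fun m => m %% N)%N Hk; rewrite !modn_dvdm //.
  by move=> ->; rewrite addnC (mulnC N) modnMDl modn_small.
have n_gt0 : (0 < n)%N by exact: prim_order_gt0 g_pr.
have kL : ((i %% n) %/ N < n %/ N)%N.
  rewrite ltn_divLR // divnK //; exact: ltn_pmod.
exists (Ordinal kL); apply/eqP => /=.
have mN : (i %% n %% N = a)%N by rewrite modn_dvdm.
have -> : (a + N * (i %% n %/ N) = i %% n)%N.
  by rewrite [in RHS](divn_eq (i %% n) N) mN addnC mulnC.
by rewrite (prim_expr_mod g_pr).
Qed.

Lemma coset0 a : in_coset g N a 0 = false.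
Proof. by apply/existsP => [[k /eqP E]]; have := g_nz (a + N * k); rewrite -E eqxx. Qed.


Lemma coset_nz a x : in_coset g N a x -> x != 0.
Proof. by apply: contraTneq => ->; rewrite coset0. Qed.

Lemma coset_mulr a b x z : (a < N)%N -> (b < N)%N -> in_coset g N a x ->
  in_coset g N ((a + b) %% N) (x * z) = in_coset g N b z.
Proof.
move=> aN bN Cx.
have [i Ei] := gpow_surj (coset_nz Cx).
move: Cx; rewrite Ei coset_exp // => /eqP Ha.
have [->|nz] := eqVneq z 0; first by rewrite mulr0 !coset0.
have [j ->] := gpow_surj nz.
rewrite -exprD !coset_exp ?ltn_pmod //.
rewrite -modnDml Ha.
by rewrite eqn_modDl (modn_small bN).
Qed.

Lemma card_coset a : (a < N)%N -> #|[set x | in_coset g N a x]| = (n %/ N)%N.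
Proof.
move=> aN.
have -> : [set x | in_coset g N a x] = [set g ^+ (a + N * val k)%N | k : 'I_(n %/ N)].
  apply/setP => x; rewrite inE; apply/existsP/imsetP => [[k /eqP ->]|[k _ ->]].
    by exists k.
  by exists k.
rewrite card_imset ?card_ord // => k1 k2 /eqP.
have bnd (k : 'I_(n %/ N)) : (a + N * k < n)%N.
  apply: (@leq_trans (N * k.+1)); first by rewrite mulnS ltn_add2r.
  by rewrite -[X in (_ <= X)%N](divnK N_dvd) mulnC leq_mul2r ltn_ord orbT.
rewrite (eq_prim_root_expr g_pr) !modn_small ?bnd // eqn_add2l eqn_pmul2l // => /eqP E.
exact: val_inj.
Qed.

Lemma coset_partition (h : F -> algC) :
  \sum_(c < N) \sum_(x | in_coset g N c x) h x = \sum_(x | x != 0) h x.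
Proof.
under eq_bigr do rewrite big_mkcond.
rewrite exchange_big [RHS]big_mkcond; apply: eq_bigr => x _ /=.
have [->|nz] := eqVneq x 0; first by rewrite big1 // => c _; rewrite coset0.
have [i Ei] := gpow_surj nz.
rewrite (bigD1 (Ordinal (ltn_pmod i N_gt0))) //= {1}Ei coset_exp ?ltn_pmod // eqxx.
rewrite big1 ?addr0 // => c /eqP ne; rewrite Ei coset_exp //.
case: eqP => // E; exfalso; apply: ne; apply: val_inj => /=; by rewrite E.
Qed.

End Cosets.


Lemma sum_shift (G : nat -> algC) (m N : nat) : (0 < N)%N ->
  \sum_(k < N) G ((k + m) %% N)%N = \sum_(c < N) G c.
Proof.
move=> N0.
pose h := fun k : 'I_N => Ordinal (ltn_pmod (k + m) N0).
have hinj : injective h.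
  move=> k1 k2 /(congr1 val) /= /eqP; rewrite eqn_modDr !modn_small // => /eqP E.
  exact: val_inj.
by rewrite [RHS](reindex_inj hinj).
Qed.

Lemma aux_sq s : (s * s - 1 = (s + 1) * s.-1)%N.
Proof. case: s => [|s] //=; nia. Qed.

Lemma aux_j s j : (0 < s)%N -> ((s + 1) * j * s = (s + 1) * j + (s + 1) * s.-1 * j)%N.
Proof. case: s => [|s] // _ /=; nia. Qed.

Lemma aux_le s h : (s.-1 <= h)%N -> (s * s - 1 <= h * (s + 1))%N.
Proof. by move=> H; rewrite aux_sq mulnC leq_mul2r H orbT. Qed.

Lemma aux_s2 s N : (2 < N)%N -> (N <= s * s - 1)%N -> (2 <= s)%N.
Proof. nia. Qed.

Section Main.
Variables (F : finFieldType) (p f N : nat) (xi : algC) (g : F).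
Hypotheses (pr_p : prime p) (chF : p \in [pchar F]) (cardF : #|F| = (p ^ f)%N)
  (xi_pr : p.-primitive_root xi) (g_pr : (#|F|.-1).-primitive_root g)
  (N_gt2 : (2 < N)%N) (N_dvd : (N %| #|F|.-1)%N).

Let n := #|F|.-1.
Let L := (n %/ N)%N.
Let e := gperiod p f xi g N.
Let ps := @psi F p f xi.

Lemma N_gt0 : (0 < N)%N. Proof. exact: ltn_trans N_gt2. Qed.
Lemma n_gt0 : (0 < n)%N. Proof. exact: prim_order_gt0 g_pr. Qed.
Lemma f_gt0 : (0 < f)%N.
Proof.
have := n_gt0; rewrite /n cardF; case: f => //; by rewrite expn0.
Qed.

Lemma e_shift c b x : (c < N)%N -> (b < N)%N -> in_coset g N c x ->
  e ((c + b) %% N)%N = \sum_(z | in_coset g N b z) ps (x * z).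
Proof.
move=> cN bN Cx; rewrite /e /gperiod.
rewrite (reindex_inj (mulfI (coset_nz g_pr N_gt0 N_dvd Cx))) /=; apply: eq_bigl => z.
exact (coset_mulr g_pr N_gt0 N_dvd z cN bN Cx).
Qed.

Lemma sum_e : \sum_(c < N) e c = -1.
Proof.
rewrite /e /gperiod (coset_partition g_pr N_gt0 N_dvd (psi p f xi)).
have := sum_psi_mul pr_p chF cardF xi_pr f_gt0 1; rewrite oner_eq0.
by under eq_bigr do rewrite mulr1.
Qed.

Lemma corr b : (b < N)%N ->
  \sum_(c < N) e c * e ((c + b) %% N)%N =
  (if in_coset g N b (-1) then (#|F|)%:R else 0) - L%:R.
Proof.
move=> bN.
transitivity (\sum_(c < N) \sum_(x | in_coset g N c x) \sum_(z | in_coset g N b z) ps (x * (1 + z))).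
  apply: eq_bigr => c _.
  have -> : e c = \sum_(x | in_coset g N c x) ps x by [].
  rewrite mulr_suml; apply: eq_bigr => x Cx.
  rewrite (e_shift (ltn_ord c) bN Cx) mulr_sumr; apply: eq_bigr => z _.
  by rewrite mulrDr mulr1 /ps (psi_add pr_p chF cardF xi_pr f_gt0).
rewrite (coset_partition g_pr N_gt0 N_dvd (fun x => \sum_(z | in_coset g N b z) ps (x * (1 + z)))).
rewrite exchange_big /=.
transitivity (\sum_(z | in_coset g N b z) ((if z == -1 then (#|F|%:R : algC) else 0) - 1)).
  apply: eq_bigr => z _; rewrite /ps (sum_psi_mul pr_p chF cardF xi_pr f_gt0) addrC.
  have -> : (z + 1 == 0) = (z == -1) by rewrite addr_eq0.
  case: eqP => _; last by rewrite add0r.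
  by rewrite -subn1 natrB //; apply/card_gt0P; exists 0.
rewrite sumrB; congr (_ - _).
  rewrite -big_mkcondr /=.
  case Cm: (in_coset g N b (-1)).
    rewrite (eq_bigl (fun z => z == -1)) ?big_pred1_eq // => z.
    by case: eqP => [->|]; rewrite ?Cm ?andbF.
  rewrite big_pred0 // => z; case: eqP => [->|]; by rewrite ?Cm ?andbF.
rewrite (eq_bigl (fun z => z \in [set x | in_coset g N b x])); last by move=> z; rewrite inE.
by rewrite sumr_const (card_coset g_pr N_gt0 N_dvd bN).
Qed.

Variables (al1 al2 al3 t : algC).
Hypotheses (h12 : al1 - al2 = - t) (h32 : al3 - al2 = t) (t_gt0 : 0 < t)
  (htri : forall a, (a < N)%N -> [\/ e a = al1, e a = al2 | e a = al3]).

Let w := wseq e al1 al3.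
Let A b := \sum_(c < N) w c * w ((c + b) %% N)%N.

Lemma tnz : t != 0. Proof. by rewrite gt_eqF. Qed.

Lemma ew c : (c < N)%N -> e c = al2 - t * w c.
Proof.
move=> cN; rewrite /w /wseq.
have E1 : al1 = al2 - t by rewrite -h12; ring.
have E3 : al3 = al2 + t by rewrite -h32; ring.
have n13 : al3 != al1.
  apply/eqP => E; have : al3 - al1 = t + t by rewrite E1 E3; ring.
  by rewrite E subrr => /eqP; rewrite eq_sym gt_eqF // addr_gt0.
case: (htri cN) => ->.
- by rewrite eqxx mulr1 E1.
- have -> : (al2 == al1) = false.
    by apply/negbTE; rewrite E1; apply/eqP => /(congr1 (fun x => al2 - x)); rewrite subrr subKr => /eqP; rewrite eq_sym (negbTE tnz).
  have -> : (al2 == al3) = false.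
    by apply/negbTE; rewrite E3; apply/eqP => /(congr1 (fun x => x - al2)); rewrite subrr addrC addKr => /eqP; rewrite eq_sym (negbTE tnz).
  by rewrite mulr0 subr0.
- by rewrite (negbTE n13) eqxx E3; ring.
Qed.

Lemma sumw : t * \sum_(c < N) w c = N%:R * al2 + 1.
Proof.
have := sum_e; rewrite (eq_bigr (fun c : 'I_N => al2 - t * w c)); last first.
  by move=> c _; rewrite ew.
rewrite sumrB sumr_const card_ord -mulr_sumr => E.
rewrite mulr_natl; transitivity (al2 *+ N - (al2 *+ N - t * \sum_(c < N) w c)); first by ring.
by rewrite E opprK.
Qed.

Lemma NL : N%:R * L%:R = (#|F|%:R : algC) - 1.
Proof.
rewrite /L /n -natrM mulnC divnK // -subn1 natrB //; apply/card_gt0P; by exists 0.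
Qed.

Lemma key b : (b < N)%N ->
  N%:R * (t ^+ 2 * A b) =
  N%:R * (if in_coset g N b (-1) then (#|F|%:R : algC) else 0) + (N%:R * al2 + 1) ^+ 2 - #|F|%:R.
Proof.
move=> bN.
have C := corr bN.
set X := (if _ then _ else _) in C *.
have S1 : \sum_(c < N) w ((c + b) %% N)%N = \sum_(c < N) w c.
  exact: (sum_shift w b N_gt0).
have E : \sum_(c < N) e c * e ((c + b) %% N)%N =
  al2 ^+ 2 *+ N - al2 * (t * \sum_(c < N) w ((c + b) %% N)%N) - al2 * (t * \sum_(c < N) w c) + t ^+ 2 * A b.
  rewrite (eq_bigr (fun c : 'I_N => al2 ^+ 2 + (- (al2 * t)) * w ((c + b) %% N)%N
      + (- (al2 * t)) * w c + t ^+ 2 * (w c * w ((c + b) %% N)%N))); last first.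
    by move=> c _; rewrite (ew (ltn_ord c)) (ew (ltn_pmod _ N_gt0)); ring.
  rewrite !big_split /= sumr_const card_ord -!mulr_sumr; rewrite /A; ring.
rewrite E S1 sumw in C.
have NL' := NL.
have -> : N%:R * (t ^+ 2 * A b) = N%:R * (al2 ^+ 2 *+ N - al2 * (N%:R * al2 + 1) - al2 * (N%:R * al2 + 1) + t ^+ 2 * A b)
   + N%:R * (N%:R * al2 ^+2 + 2 * al2).
  rewrite -mulr_natr; ring.
rewrite C; rewrite mulrBr NL'; ring.
Qed.

Lemma MMt (i j : 'I_N) :
  (circ_mx N w *m (circ_mx N w)^T) i j = A ((i + N - j) %% N)%N.
Proof.
rewrite !mxE.
transitivity (\sum_(k < N) (fun c => w c * w ((c + (i + N - j)) %% N)%N) ((k + (N - i)) %% N)%N).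
  apply: eq_bigr => k _; rewrite !mxE /=.
  have iN := ltn_ord i; have jN := ltn_ord j.
  rewrite addnBA ?(ltnW iN) //; congr (_ * w _).
  rewrite modnDml.
  have -> : (k + N - i + (i + N - j) = (k + N - j) + N)%N by lia.
  by rewrite modnDr.
rewrite (sum_shift (fun c => w c * w ((c + (i + N - j)) %% N)%N) (N - i) N_gt0).
by apply: eq_bigr => c _; rewrite modnDmr.
Qed.

Lemma e_Aint a : e a \in Aint.
Proof.
rewrite /e /gperiod; apply: rpred_sum => x _.
by rewrite /psi; apply: rpredX; exact: Aint_prim_root xi_pr.
Qed.

Lemma S_ge0 (s : nat) (Fs : {set F}) (x : F) :
  (forall y1 y2, y1 \in Fs -> (y1 + y2 \in Fs) = (y2 \in Fs)) ->
  0 <= \sum_(y in Fs) ps (y * x).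
Proof.
move=> Fadd.
case: (boolP [exists y in Fs, ps (y * x) != 1]) => [/existsP [y0 /andP [Fy0 nt]]|].
  set S := \sum_(y in Fs) _.
  have : S = ps (y0 * x) * S.
    rewrite /S mulr_sumr (reindex_inj (addrI y0)) /=.
    rewrite (eq_bigl (fun y => y \in Fs)); last by move=> y; rewrite Fadd.
    by apply: eq_bigr => y _; rewrite mulrDl /ps (psi_add pr_p chF cardF xi_pr f_gt0).
  move/eqP; rewrite -subr_eq0 -{1}[S]mul1r -mulrBl mulf_eq0 subr_eq0 eq_sym (negbTE nt).
  by move/eqP ->.
rewrite negb_exists => /forallP H.
rewrite (eq_bigr (fun _ => 1)); last first.
  by move=> y Fy; move: (H y); rewrite Fy /= negbK => /eqP.
by rewrite sumr_const ler0n.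
Qed.

Lemma no_neg (s a1 : nat) : #|F| = (s ^ 2)%N -> N%:R * al2 = - (s%:R + 1) ->
  al2 \in Num.int -> (a1 < N)%N -> e a1 = al1 -> False.
Proof.
move=> qs Nal2 al2Z a1N ea1.
have nE : n = (s * s - 1)%N by rewrite /n qs -mulnn subn1.
have s2 : (2 <= s)%N.
  have nN : (N <= n)%N := dvdn_leq n_gt0 N_dvd.
  rewrite nE in nN; exact: aux_s2 N_gt2 nN.
have Ndvd : (N %| s + 1)%N.
  have : - al2 \is a Num.nat.
    rewrite natrEint rpredN al2Z /=.
    have : 0 < N%:R * (- al2) by rewrite mulrN Nal2 opprK ltr_wpDl // ler0n.
    by rewrite pmulr_rgt0 ?ltr0n ?N_gt0 // => /ltW.
  move/natrP => [m Em].
  have : N%:R * (- al2) = (s + 1)%:R by rewrite mulrN Nal2 opprK natrD.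
  rewrite Em -natrM => /eqP; rewrite eqr_nat => /eqP <-.
  exact: dvdn_mulr.
have [k _ sk] : exists2 k, (k <= f)%N & s = (p ^ k)%N.
  apply/dvdn_pfactor => //; rewrite -cardF qs; exact: dvdn_mulr.
pose Fs := [set y : F | y ^+ s == y].
have Fadd y1 y2 : y1 \in Fs -> (y1 + y2 \in Fs) = (y2 \in Fs).
  rewrite !inE => /eqP E1; rewrite sk exprDn_pchar ?(pcnat pr_p chF cardF xi_pr f_gt0) // -sk E1.
  by rewrite (inj_eq (addrI y1)).
have F0 : 0 \in Fs by rewrite inE expr0n; case: (s) s2.
pose Hs := Fs :\ 0.
have hge : (s.-1 <= #|Hs|)%N.
  have nE' : n = ((s + 1) * s.-1)%N by rewrite nE aux_sq.
  pose G := fun j : 'I_s.-1 => g ^+ ((s + 1) * j).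
  have bnd (j : 'I_s.-1) : ((s + 1) * j < n)%N by rewrite nE' ltn_pmul2l // addn1.
  have Ginj : injective G.
    move=> j1 j2 /eqP; rewrite /G (eq_prim_root_expr g_pr) -/n !modn_small ?bnd //.
    by rewrite eqn_pmul2l ?addn1 // => /eqP /val_inj.
  rewrite -[s.-1]card_ord -(card_imset _ Ginj); apply: subset_leq_card.
  apply/subsetP => y /imsetP [j _ ->]; rewrite !inE (g_nz g_pr N_gt0 N_dvd) /= /G -exprM.
  rewrite (eq_prim_root_expr g_pr) -/n.
  have -> : ((s + 1) * j * s = (s + 1) * j + n * j)%N.
    by rewrite nE' (aux_j _ (ltnW s2)).
  by rewrite addnC (mulnC n) modnMDl.
have Hmul y x : y \in Hs -> in_coset g N a1 (y * x) = in_coset g N a1 x.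
  rewrite !inE => /andP [ynz /eqP ys].
  have [i Ei] := gpow_surj g_pr N_gt0 N_dvd ynz.
  have y1 : g ^+ (i * s.-1) = 1.
    apply: (mulfI ynz); rewrite mulr1 exprM -Ei -exprS prednK ?ys //; exact: leq_trans s2.
  move/eqP: y1; rewrite -(prim_order_dvd g_pr) -/n.
  have -> : n = (s.-1 * (s + 1))%N by rewrite nE aux_sq mulnC.
  rewrite [(i * _)%N]mulnC dvdn_pmul2l; last by case: (s) s2.
  move=> /(dvdn_trans Ndvd) Ni.
  have C0 : in_coset g N 0 y by rewrite Ei (coset_exp g_pr N_gt0 N_dvd _ N_gt0); exact: Ni.
  have := coset_mulr g_pr N_gt0 N_dvd x N_gt0 a1N C0.
  by rewrite add0n modn_small.
pose h := #|Hs|.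
have hal1 : - (L%:R) <= h%:R * al1.
  have E : h%:R * al1 = \sum_(y in Hs) e a1 by rewrite sumr_const ea1 mulr_natl.
  have E2 : \sum_(y in Hs) e a1 =
      \sum_(x | in_coset g N a1 x) (\sum_(y in Fs) ps (y * x) - 1).
    rewrite (eq_bigr (fun y => \sum_(x | in_coset g N a1 x) ps (y * x))); last first.
      move=> y Hy; have ynz : y != 0 by move: Hy; rewrite !inE => /andP [].
      rewrite /e /gperiod (reindex_inj (mulfI ynz)) /=; apply: eq_bigl => x.
      by rewrite Hmul.
    rewrite exchange_big /=; apply: eq_bigr => x _.
    rewrite (bigD1 0 F0) /=.
    have -> : ps (0 * x) = 1 by rewrite /ps mul0r; exact: (psi0 pr_p chF cardF xi_pr f_gt0).
    rewrite addrC addrK.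
    apply: eq_bigl => y /=; by rewrite /Hs in_setD1 andbC.
  rewrite E E2 sumrB.
  rewrite [X in _ - X](eq_bigl (fun z => z \in [set x | in_coset g N a1 x])); last by move=> z; rewrite inE.
  rewrite [X in _ - X]sumr_const (card_coset g_pr N_gt0 N_dvd a1N).
  apply: ler_wpDl; last by rewrite lexx.
  by apply: sumr_ge0 => x _; apply: (S_ge0 s).
have E1 : al1 = al2 - t by rewrite -h12; ring.
have Z0 : 0 <= N%:R * (h%:R * al1 + L%:R).
  apply: mulr_ge0; first exact: ler0n.
  by have := hal1; rewrite -subr_ge0 opprK.
have ZE : N%:R * (h%:R * al1 + L%:R) =
    ((N * L)%N%:R - (h * (s + 1))%N%:R) - h%:R * N%:R * t.
  transitivity (h%:R * (N%:R * al2) - h%:R * N%:R * t + N%:R * L%:R); first by rewrite E1; ring.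
  rewrite Nal2 !natrM natrD; ring.
have NLn : (N * L)%N = n by rewrite mulnC divnK.
have h_gt0 : (0 < h)%N by apply: leq_trans hge; case: (s) s2 => [|[|]].
have c_gt0 : 0 < h%:R * N%:R * t by rewrite !mulr_gt0 ?ltr0n ?N_gt0.
have ab : ((N * L)%N%:R : algC) <= (h * (s + 1))%N%:R.
  by rewrite ler_nat NLn nE; exact: aux_le.
have : N%:R * (h%:R * al1 + L%:R) < 0.
  rewrite ZE subr_lt0; apply: le_lt_trans c_gt0; by rewrite subr_le0.
by move/(le_lt_trans Z0); rewrite ltxx.
Qed.

Lemma w_sq c : 0 <= w c * w c.
Proof. by rewrite /w /wseq; case: ifP => _; [|case: ifP => _]; rewrite ?mulr1 ?mulrNN ?mulr1 ?mulr0 ?ler01. Qed.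

Lemma w_vals c : w c \in [:: 0; 1; -1].
Proof. by rewrite /w /wseq; case: ifP => _; [|case: ifP => _]; rewrite !inE eqxx ?orbT. Qed.

Lemma mod_ne0 (i j : 'I_N) : i != j -> ((i + N - j) %% N)%N != 0%N.
Proof.
move=> ne; have iN := ltn_ord i; have jN := ltn_ord j.
case: (leqP j i) => ji.
  have -> : (i + N - j = (i - j) + N)%N by lia.
  rewrite modnDr modn_small; last by lia.
  apply/eqP => E; move/negP: ne; apply; apply/eqP/val_inj => /=; lia.
rewrite modn_small; last by lia.
by apply/eqP; lia.
Qed.

Lemma main_iff (Q2 : al2 \in Crat)
  (ex1 : exists2 a, (a < N)%N & e a = al1) (ex2 : exists2 a, (a < N)%N & e a = al2) :
  is_CW (#|F|%:R / t ^+ 2) (circ_mx N w)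
   <-> exists s : nat, #|F| = (s ^ 2)%N /\ al2 = (s%:R - 1) / N%:R.
Proof.
have Nnz : (N%:R : algC) != 0 by rewrite pnatr_eq0 -lt0n N_gt0.
have tnz2 : t ^+ 2 != 0 by rewrite expf_neq0 // tnz.
have m1nz : (-1 : F) != 0 by rewrite oppr_eq0 oner_eq0.
have [i0 Ei0] := gpow_surj g_pr N_gt0 N_dvd m1nz.
have inC b : (b < N)%N -> in_coset g N b (-1) = (b == i0 %% N)%N.
  by move=> bN; rewrite Ei0 (coset_exp g_pr N_gt0 N_dvd _ bN) eq_sym.
have [a1 a1N ea1] := ex1.
have A0 : 0 < A 0.
  rewrite /A (bigD1 (Ordinal a1N)) //= addn0 (modn_small a1N).
  rewrite {1 2}/w /wseq ea1 eqxx mulr1 ltr_wpDr //.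
  by apply: sumr_ge0 => c _; rewrite addn0 modn_small //; apply: w_sq.
split.
- move=> [_ MM].
  pose b := if (i0 %% N == 1)%N then 2%N else 1%N.
  have bN : (b < N)%N by rewrite /b; case: ifP => _; [exact: N_gt2 | exact: ltn_trans N_gt2].
  have bnz : (b != 0)%N by rewrite /b; case: ifP.
  have bb0 : (b == i0 %% N)%N = false.
    rewrite /b; case: (eqVneq (i0 %% N)%N 1%N) => [-> //|H].
    by rewrite eq_sym (negbTE H).
  have Ab : A b = 0.
    have := congr1 (fun M : 'M[algC]_N => M (Ordinal bN) (Ordinal N_gt0)) MM.
    rewrite MMt /= subn0 modnDr (modn_small bN) => ->.
    by rewrite mxE /= eqE /= (negbTE bnz) mulr0n.
  have := key bN; rewrite Ab mulr0 mulr0 inC // bb0 mulr0 add0r => /esym /eqP.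
  rewrite subr_eq0 => /eqP r2.
  set r := N%:R * al2 + 1 in r2.
  have [a2 a2N ea2] := ex2.
  have al2Z : al2 \in Num.int by apply: Cint_rat_Aint Q2 _; rewrite -ea2 e_Aint.
  have rZ : r \in Num.int by apply: rpredD; [apply: rpredM => //; exact: rpred_nat | exact: rpred1].
  have /natrP [s Es] := natr_norm_int rZ.
  have qs : #|F| = (s ^ 2)%N.
    apply/eqP; rewrite -(eqr_nat algC) natrX -Es.
    by rewrite real_normK ?Rreal_int // r2.
  have := intrEsign rZ; rewrite Es.
  case: (r < 0) => /= Er.
    exfalso; apply: (no_neg qs _ al2Z a1N ea1).
    have : N%:R * al2 = r - 1 by rewrite /r addrK.
    by rewrite Er expr1 mulN1r => ->; rewrite opprD.
  exists s; split => //.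
  rewrite expr0 mul1r in Er.
  by apply: (mulfI Nnz); rewrite [RHS]mulrC divfK // -Er /r addrK.
- move=> [s [qs al2E]].
  have rs : N%:R * al2 + 1 = s%:R by rewrite al2E mulrC divfK // subrK.
  have kb b : (b < N)%N -> t ^+ 2 * A b = if in_coset g N b (-1) then (#|F|%:R : algC) else 0.
    move=> bN; apply: (mulfI Nnz); rewrite key // rs -natrX -qs; ring.
  have b00 : (0 == i0 %% N)%N.
    have := kb 0%N N_gt0; rewrite inC ?N_gt0 //; case: eqP => // _ /eqP.
    by rewrite mulf_eq0 (negbTE tnz2) /= gt_eqF.
  split; first by move=> i j; rewrite mxE w_vals.
  apply/matrixP => i j; rewrite MMt !mxE.
  have bN := ltn_pmod (i + N - j) N_gt0.
  have := kb _ bN; rewrite inC //.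
  case: (eqVneq i j) => [<-|ne].
    rewrite addKn modnn b00 mulr1n => E.
    by apply: (mulfI tnz2); rewrite E mulrC divfK.
  have -> : (((i + N - j) %% N)%N == i0 %% N)%N = false.
    by apply/negbTE; rewrite -(eqP b00); exact: (mod_ne0 ne).
  move=> /eqP; rewrite mulf_eq0 (negbTE tnz2) /= => /eqP ->.
  by rewrite mulr0n.
Qed.

End Main.


Theorem proposition2p6 (F : finFieldType) (p f N : nat) (xi : algC) (g : F)
    (al1 al2 al3 t : algC) :
  prime p -> p \in [pchar F] -> #|F| = (p ^ f)%N ->
  p.-primitive_root xi ->
  (#|F|.-1).-primitive_root g ->
  (2 < N)%N -> (N %| #|F|.-1)%N ->
  al1 \in Crat -> al2 \in Crat -> al3 \in Crat ->
  al1 - al2 = - t -> al3 - al2 = t -> 0 < t ->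
  (forall a, (a < N)%N ->
     [\/ gperiod p f xi g N a = al1, gperiod p f xi g N a = al2 | gperiod p f xi g N a = al3]) ->
  (exists2 a, (a < N)%N & gperiod p f xi g N a = al1) ->
  (exists2 a, (a < N)%N & gperiod p f xi g N a = al2) ->
  (exists2 a, (a < N)%N & gperiod p f xi g N a = al3) ->
  (is_CW (#|F|%:R / t ^+ 2) (circ_mx N (wseq (gperiod p f xi g N) al1 al3))
   <-> exists s : nat, #|F| = (s ^ 2)%N /\ al2 = (s%:R - 1) / N%:R).
Proof.
move=> pr_p chF cardF xi_pr g_pr N2 Ndvd _ Q2 _ h12 h32 tpos htri ex1 ex2 _.
exact: (main_iff pr_p chF cardF xi_pr g_pr N2 Ndvd h12 h32 tpos htri Q2 ex1 ex2).
Qed.
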